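(* Let $n\ge2$, let $P$ be a partial $n$-Metric on a set $X$, let $x_o\in X$ and let $f:X\to X$. Suppose there are real numbers $r$ and $0<c<1$ such that for every natural number $i$, $$r\le P(\langle f^{i+1}(x_o)\rangle^n)\quad\text{and}\quad P(\langle f^i(x_o)\rangle^{n-1},f^{i+1}(x_o))\le r+c^i\,\big|P(\langle x_o\rangle^{n-1},f(x_o))\big|$$ (i.e. $f$ is an orbital $c_r$-contraction at $x_o$). Then the orbit $\{f^i(x_o)\}_{i\in\mathbb{N}}$ is a Cauchy sequence (i.e. $f$ is a Cauchy function at $x_o$).
   Context: Notation: $\langle a\rangle^k$ denotes the $k$-tuple $(a,\dots,a)$ inserted into an argument list; $f^0(x_o)=x_o$, $f^{i+1}(x_o)=f(f^i(x_o))$. A partial $n$-Metric on $X$ is a function $P:X^n\to\mathbb{R}$ such that for all $x_1,\dots,x_n,a\in X$: (1) $P(\langle x_1\rangle^n)\le P(\langle x_1\rangle^{n-1},x_2)$; (2) $P$ is invariant under permutations of its arguments; (3) $P(\langle x_1\rangle^{n-1},x_2)=P(\langle x_1\rangle^n)$ and $P(\langle x_2\rangle^{n-1},x_1)=P(\langle x_2\rangle^n)$ iff $x_1=x_2$; (4) $P(x_1,\dots,x_n)\le P(x_1,\dots,x_{n-1},a)+P(\langle a\rangle^{n-1},x_n)-P(\langle a\rangle^n)$. A sequence $\{x_i\}$ is Cauchy if there is $r'\in\mathbb{R}$ (its central distance) such that for every $\epsilon>0$ there is $N$ with $|P(x_{i_1},\dots,x_{i_n})-r'|<\epsilon$ for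 all $i_1,\dots,i_n>N$. *)

(* Defs.v *)
From mathcomp Require Import all_boot all_fingroup.
From Stdlib Require Import Reals.
Unset Printing Implicit Defensive.

(* An element of X^n is a function 'I_n -> X (coordinates 0..n-1). *)

Definition ntconst (X : Type) (n : nat) (a : X) : 'I_n -> X := fun _ => a.
Arguments ntconst {X} n a.

Definition ntset_last (X : Type) (n : nat) (x : 'I_n -> X) (a : X) : 'I_n -> X :=
  fun i => if (val i == n.-1)%N then a else x i.
Arguments ntset_last {X n} x a.

Definition ntab (X : Type) (n : nat) (a b : X) : 'I_n -> X :=
  @ntset_last X n (ntconst n a) b.
Arguments ntab {X} n a b.

Open Scope R_scope.

Definition partial_nmetric (X : Type) (n : nat) (P : ('I_n -> X) -> R) : Prop :=
  (forall x1 x2 : X, P (ntconst n x1) <= P (ntab n x1 x2)) /\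
  (forall (x : 'I_n -> X) (s : {perm 'I_n}), P (fun i => x (s i)) = P x) /\
  (forall x1 x2 : X,
      (P (ntab n x1 x2) = P (ntconst n x1) /\ P (ntab n x2 x1) = P (ntconst n x2))
      <-> x1 = x2) /\
  (forall (x : 'I_n -> X) (a : X) (j : 'I_n), val j = n.-1 ->
      P x <= P (@ntset_last X n x a) + P (ntab n a (x j)) - P (ntconst n a)).

Definition nCauchy (X : Type) (n : nat) (P : ('I_n -> X) -> R) (u : nat -> X) : Prop :=
  exists r' : R, forall eps : R, 0 < eps ->
    exists N : nat, forall idx : 'I_n -> nat, (forall k : 'I_n, (N < idx k)%nat) ->
      Rabs (P (fun k => u (idx k)) - r') < eps.
Arguments partial_nmetric {X n} P.
Arguments nCauchy {X n} P u.

(* Main.v *)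
Require Import Defs.
From mathcomp Require Import all_boot all_fingroup.
From Stdlib Require Import Reals Lra Psatz FunctionalExtensionality.
Open Scope R_scope.

Definition upd (X : Type) (n : nat) (y : 'I_n -> X) (j : 'I_n) (a : X) : 'I_n -> X :=
  fun i => if i == j then a else y i.

Arguments upd {X n}.

Lemma lastP (n : nat) : (2 <= n)%nat -> ltn n.-1 n.
Proof. case: n => [H|n _]; [inversion H | exact: ltnSn]. Qed.

Lemma tri_any (X : Type) (n : nat) (P : ('I_n -> X) -> R) (Hn : (2 <= n)%nat) :
  partial_nmetric P -> forall y j a,
  P y <= P (upd y j a) + P (ntab n a (y j)) - P (ntconst n a).
Proof.
move=> [_ [Hperm [_ Htri]]] y j a.
pose l : 'I_n := Ordinal (lastP n Hn).
set s := tperm j l.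
have E1 : P y = P (fun i => y (s i)) by rewrite (Hperm y s).
have := Htri (fun i => y (s i)) a l erefl.
have -> : (fun i => y (s i)) l = y j by rewrite /= /s tpermR.
have -> : ntset_last (fun i => y (s i)) a = (fun i => upd y j a (s i)).
  apply: functional_extensionality => i.
  rewrite /ntset_last /upd.
  have -> : (val i == n.-1) = (i == l) by [].
  have -> : (s i == j) = (i == l).
    by rewrite -{1}(tpermR j l) (inj_eq (@perm_inj _ s)).
  by [].
rewrite (Hperm (upd y j a) s) => H. by rewrite E1.
Qed.

Definition yt (X : Type) (n : nat) (g : nat -> X) (idx : 'I_n -> nat) (m t : nat) : 'I_n -> X :=
  fun k => if (val k < t)%nat then g m else g (idx k).
Arguments yt {X n}.

Lemma yt0 (X : Type) (n : nat) g idx m : @yt X n g idx m 0 = (fun k => g (idx k)).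
Proof. by apply: functional_extensionality => k; rewrite /yt ltn0. Qed.

Lemma ytn (X : Type) (n : nat) g idx m : @yt X n g idx m n = ntconst n (g m).
Proof. by apply: functional_extensionality => k; rewrite /yt ltn_ord. Qed.

Lemma ytS (X : Type) (n : nat) g idx m t (Ht : (t < n)%nat) (a : X) :
  upd (yt g idx m t.+1) (Ordinal Ht) a = upd (yt g idx m t) (Ordinal Ht) a.
Proof.
apply: functional_extensionality => k; rewrite /yt /upd.
case: eqP => [//|Hne]; rewrite ltnS (leq_eqVlt (val k)).
have -> : (val k == t) = false.
  apply/negbTE/eqP => Hk; apply: Hne; exact: val_inj.
by [].
Qed.

Lemma yt_upd (X : Type) (n : nat) g idx m t (Ht : (t < n)%nat) :
  upd (yt g idx m t) (Ordinal Ht) (g m) = @yt X n g idx m t.+1.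
Proof.
apply: functional_extensionality => k; rewrite /yt /upd.
case: eqP => [-> /=|Hne]; first by rewrite ltnSn.
rewrite ltnS (leq_eqVlt (val k)).
have -> : (val k == t) = false.
  apply/negbTE/eqP => Hk; apply: Hne; exact: val_inj.
by [].
Qed.

Lemma yt_at (X : Type) (n : nat) g idx m t (Ht : (t < n)%nat) :
  @yt X n g idx m t (Ordinal Ht) = g (idx (Ordinal Ht)).
Proof. by rewrite /yt /= ltnn. Qed.

Lemma yt_atS (X : Type) (n : nat) g idx m t (Ht : (t < n)%nat) :
  @yt X n g idx m t.+1 (Ordinal Ht) = g m.
Proof. by rewrite /yt /= ltnSn. Qed.

Lemma upper_repl (X : Type) (n : nat) (P : ('I_n -> X) -> R) (Hn : (2 <= n)%nat)
  (HP : partial_nmetric P) (g : nat -> X) (idx : 'I_n -> nat) (m : nat) (E : R) :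
  (forall k, P (ntab n (g m) (g (idx k))) - P (ntconst n (g m)) <= E) ->
  P (fun k => g (idx k)) <= P (ntconst n (g m)) + INR n * E.
Proof.
move=> HE.
suff H : forall t, (t <= n)%nat -> P (fun k => g (idx k)) <= P (yt g idx m t) + INR t * E.
  by rewrite -(@ytn _ _ g idx m); apply: H.
elim => [_|t IH Ht]; first by rewrite yt0 /=; lra.
have {IH} := IH (ltnW Ht).
have := @tri_any _ _ P Hn HP (yt g idx m t) (Ordinal Ht) (g m).
rewrite yt_upd yt_at S_INR.
have := HE (Ordinal Ht); lra.
Qed.

Lemma lower_repl (X : Type) (n : nat) (P : ('I_n -> X) -> R) (Hn : (2 <= n)%nat)
  (HP : partial_nmetric P) (g : nat -> X) (idx : 'I_n -> nat) (M : nat) (E : R) :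
  (forall k, P (ntab n (g (idx k)) (g M)) - P (ntconst n (g (idx k))) <= E) ->
  P (ntconst n (g M)) - INR n * E <= P (fun k => g (idx k)).
Proof.
move=> HE.
suff H : forall t, (t <= n)%nat -> P (yt g idx M t) - INR t * E <= P (fun k => g (idx k)).
  by rewrite -(@ytn _ _ g idx M); apply: H.
elim => [_|t IH Ht]; first by rewrite yt0 /=; lra.
have {IH} := IH (ltnW Ht).
have := @tri_any _ _ P Hn HP (yt g idx M t.+1) (Ordinal Ht) (g (idx (Ordinal Ht))).
rewrite ytS yt_atS S_INR.
have -> : upd (yt g idx M t) (Ordinal Ht) (g (idx (Ordinal Ht))) = yt g idx M t.
  apply: functional_extensionality => k; rewrite /upd.
  by case: eqP => [->|//]; rewrite yt_at.
have := HE (Ordinal Ht); lra.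
Qed.

Lemma pow_le1 (c : R) (d : nat) : 0 <= c -> c <= 1 -> c ^ d <= 1.
Proof.
move=> H0 H1; elim: d => [|d IH] /=; first lra.
have := pow_le c d H0. nra.
Qed.

Lemma ntab_diag (X : Type) (n : nat) (a : X) : ntab n a a = ntconst n a.
Proof.
by apply: functional_extensionality => i; rewrite /ntab /ntset_last /ntconst; case: ifP.
Qed.

Lemma ntset_last_ab (X : Type) (n : nat) (a b c : X) :
  ntset_last (ntab n a b) c = ntab n a c.
Proof.
by apply: functional_extensionality => i; rewrite /ntab /ntset_last; case: (val i == n.-1).
Qed.

Lemma ntab_last (X : Type) (n : nat) (a b : X) (l : 'I_n) :
  val l = n.-1 -> ntab n a b l = b.
Proof. by move=> Hl; rewrite /ntab /ntset_last Hl eqxx. Qed.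

Theorem lemma5p11 (X : Type) (n : nat) (P : ('I_n -> X) -> R)
  (x0 : X) (f : X -> X) (r c : R) :
  (2 <= n)%nat ->
  partial_nmetric P ->
  0 < c -> c < 1 ->
  (forall i : nat,
      r <= P (ntconst n (iter i.+1 f x0)) /\
      P (ntab n (iter i f x0) (iter i.+1 f x0))
        <= r + c ^ i * Rabs (P (ntab n x0 (f x0)))) ->
  nCauchy P (fun i => iter i f x0).
Proof.
move=> Hn HP Hc0 Hc1 Hcon.
set g := fun i => iter i f x0.
set K := Rabs (P (ntab n x0 (f x0))).
have HK : 0 <= K by apply: Rabs_pos.
have HPc := HP; move: HPc => [Hax1 [_ [_ Htri]]].
pose l : 'I_n := Ordinal (lastP n Hn).
have HA : forall i, (0 < i)%nat -> r <= P (ntconst n (g i)).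
  by case=> [//|i] _; case: (Hcon i).
have HB : forall i, P (ntab n (g i) (g i.+1)) <= r + c ^ i * K.
  by move=> i; case: (Hcon i).
have chain : forall j d, (0 < j)%nat ->
    (1 - c) * (P (ntab n (g j) (g (j + d)%nat)) - P (ntconst n (g j)))
      <= K * c ^ j * (1 - c ^ d).
  move=> j d Hj; elim: d => [|d IH].
    rewrite addn0 ntab_diag /=; lra.
  have := Htri (ntab n (g j) (g (j + d.+1)%nat)) (g (j + d)%nat) l erefl.
  rewrite ntset_last_ab ntab_last //.
  have -> : g (j + d.+1)%nat = g (j + d)%nat.+1 by rewrite addnS.
  have := HB (j + d)%nat.
  have := HA (j + d)%nat (leq_trans Hj (leq_addr _ _)).
  rewrite pow_add /=.
  have := pow_le c j (Rlt_le _ _ Hc0).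
  have := pow_le c d (Rlt_le _ _ Hc0).
  move=> H1 H2 H3 H4 H5.
  nra.
exists r => eps Heps.
set Q0 := K / (1 - c).
have HQ0 : 0 <= Q0 by apply: Rmult_le_pos; [lra | left; apply: Rinv_0_lt_compat; lra].
have HQ0e : (1 - c) * Q0 = K by rewrite /Q0; field; lra.
set Cst := INR n * Q0 + K + 1.
have HCst : 0 < Cst by have := pos_INR n; rewrite /Cst; nra.
have [N HN] := pow_lt_1_zero c ltac:(rewrite Rabs_right; lra) (eps / Cst)
  ltac:(apply: Rdiv_lt_0_compat; lra).
have HcN := HN N (Nat.le_refl N).
rewrite Rabs_right in HcN; last by apply: Rle_ge; apply: pow_le; lra.
have HcN' : c ^ N * Cst < eps.
  have -> : eps = (eps / Cst) * Cst by field; lra.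
  by apply: Rmult_lt_compat_r.
have HcN0 : 0 <= c ^ N by apply: pow_le; lra.
set E := c ^ N * Q0.
have powmono : forall j, (N <= j)%nat -> c ^ j <= c ^ N.
  move=> j Hj; rewrite -(subnKC Hj) pow_add.
  have := pow_le1 c (j - N)%nat (Rlt_le _ _ Hc0) (Rlt_le _ _ Hc1).
  have := pow_le c (j - N)%nat (Rlt_le _ _ Hc0). nra.
have cb : forall j k, (N < j)%nat -> (j <= k)%nat ->
    P (ntab n (g j) (g k)) - P (ntconst n (g j)) <= E.
  move=> j k Hj Hk.
  have := chain j (k - j)%nat (leq_ltn_trans (leq0n N) Hj).
  rewrite (subnKC Hk) => H.
  have := powmono j (ltnW Hj).
  have := pow_le c (k - j)%nat (Rlt_le _ _ Hc0).
  have := pow_le c j (Rlt_le _ _ Hc0).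
  move=> H1 H2 H3.
  apply: (Rmult_le_reg_l (1 - c)); first lra.
  have -> : (1 - c) * E = c ^ N * K by rewrite /E -HQ0e; ring.
  have := Rmult_le_pos _ _ (Rmult_le_pos _ _ HK H1) H2.
  have : 0 <= K * (c ^ N - c ^ j) by apply: Rmult_le_pos; lra.
  nra.
exists N => idx Hidx.
pose M := (\max_k idx k)%nat.
have HM : forall k, (idx k <= M)%nat by move=> k; apply: leq_bigmax.
have Hup := @upper_repl _ _ P Hn HP g idx N.+1 E
  (fun k => cb N.+1 (idx k) (ltnSn N) (Hidx k)).
have Hlo := @lower_repl _ _ P Hn HP g idx M E
  (fun k => cb (idx k) M (Hidx k) (HM k)).
have HAM : r <= P (ntconst n (g M)).
  apply: HA; apply: leq_ltn_trans (leq0n N) _; apply: leq_trans (Hidx l) (HM l).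
have Ham : P (ntconst n (g N.+1)) <= r + c ^ N.+1 * K.
  apply: Rle_trans (HB N.+1); exact: Hax1.
have := powmono N.+1 (leqnSn N).
have := pos_INR n.
rewrite /E in Hup Hlo.
move=> Hn0 Hpm.
change (fun k : 'I_n => iter (idx k) f x0) with (fun k => g (idx k)).
apply: Rabs_def1.
- rewrite /Cst in HcN'. nra.
- rewrite /Cst in HcN'. nra.
Qed.
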